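(* The pencils in $\mathcal G$ are exactly those subsets of $\mathcal G$ with more than one element that are intersections of two distinct maximal adjacency cliques of $\mathcal G$.
   Context: $K$ is a (not necessarily commutative) field and $V$ is a left vector space over $K$ of arbitrary (possibly infinite) dimension with $\dim V>2$. $\mathcal G:=\{X\le V\mid X\cong V/X\}$, assumed nonempty. Two elements $X,Y\in\mathcal G$ are adjacent if $\dim((X+Y)/X)=\dim((X+Y)/Y)=1$. A maximal adjacency clique is a subset of $\mathcal G$ of mutually adjacent elements which is maximal with respect to inclusion among such subsets. A pencil is a set $\mathcal G[M,N]:=\{X\in\mathcal G\mid M<X<N\}$ (strict inclusions), where $M,N\le V$ are subspaces such that there exists $X\in\mathcal G$ with $M\le X\le N$ and $\dim(X/M)=\dim(N/X)=1$. *)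

(* Defs.v *)
From HB Require Import structures.
From mathcomp Require Import all_boot all_order all_algebra.
From mathcomp Require Import boolp classical_sets.
Set Implicit Arguments. Unset Strict Implicit. Unset Printing Implicit Defensive.
Import GRing.Theory.
Local Open Scope ring_scope.
Local Open Scope classical_set_scope.

(* A (not necessarily commutative) field = division ring: a unit ring
   (1 != 0 is built in) in which every nonzero element is a unit. *)
Definition is_division_ring (K : unitRingType) : Prop :=
  forall x : K, x != 0 -> x \is a GRing.unit.

Section Grassmann.
Variables (K : unitRingType) (V : lmodType K).

Definition is_subspace (X : set V) : Prop :=
  X 0 /\ (forall x y, X x -> X y -> X (x + y)) /\
  (forall (a : K) x, X x -> X (a *: x)).

Definition ssum (X Y : set V) : set V :=
  [set z | exists x y, X x /\ Y y /\ z = x + y].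

Definition line (v : V) : set V := [set z | exists a : K, z = a *: v].

Definition codim1 (X Z : set V) : Prop :=
  X `<=` Z /\ exists v, Z v /\ ~ X v /\ Z = ssum X (line v).

Definition dim_gt2 : Prop :=
  exists u v w : V, forall a b c : K, a *: u + b *: v + c *: w = 0 ->
    a = 0 /\ b = 0 /\ c = 0.

(* X ~= V / X : there is a linear map V -> V with image X and kernel X
   (first isomorphism theorem: V/ker f ~= im f). *)
Definition iso_quot (X : set V) : Prop :=
  exists f : {linear V -> V},
    range f = X /\ [set v | f v = 0] = X.

Definition Gset : set (set V) := [set X | is_subspace X /\ iso_quot X].

Definition adjacent (X Y : set V) : Prop :=
  codim1 X (ssum X Y) /\ codim1 Y (ssum X Y).

Definition is_clique (C : set (set V)) : Prop :=
  C `<=` Gset /\ forall X Y, C X -> C Y -> X <> Y -> adjacent X Y.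

Definition is_max_clique (C : set (set V)) : Prop :=
  is_clique C /\ forall D, is_clique D -> C `<=` D -> D = C.

Definition pencil_of (M N : set V) : set (set V) :=
  [set X | Gset X /\ M `<` X /\ X `<` N].

Definition is_pencil (P : set (set V)) : Prop :=
  exists M N : set V, is_subspace M /\ is_subspace N /\
    (exists X, Gset X /\ codim1 M X /\ codim1 X N) /\
    P = pencil_of M N.

End Grassmann.

(* Main.v *)
Require Import Defs.
From HB Require Import structures.
From mathcomp Require Import all_boot all_order all_algebra.
From mathcomp Require Import boolp classical_sets.
From Stdlib Require Import Classical.
Set Implicit Arguments. Unset Strict Implicit.
Import GRing.Theory.
Local Open Scope ring_scope.
Local Open Scope classical_set_scope.

Section LA.
Variables (K : unitRingType) (V : lmodType K).
Hypothesis HK : is_division_ring K.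

Implicit Types (X Y Z M N S W : set V) (u v w x y z : V) (a b c : K).

Lemma unitK a : a != 0 -> a^-1 * a = 1.
Proof. by move=> /HK; exact: mulVr. Qed.
Lemma unitK' a : a != 0 -> a * a^-1 = 1.
Proof. by move=> /HK; exact: mulrV. Qed.

Lemma sub0 X : is_subspace X -> X 0. Proof. by case. Qed.
Lemma subD X x y : is_subspace X -> X x -> X y -> X (x + y).
Proof. by case=> _ [H _]; apply: H. Qed.
Lemma subZ X a x : is_subspace X -> X x -> X (a *: x).
Proof. by case=> _ [_ H]; apply: H. Qed.
Lemma subN X x : is_subspace X -> X x -> X (- x).
Proof. by move=> hX hx; rewrite -scaleN1r; apply: subZ. Qed.
Lemma subB X x y : is_subspace X -> X x -> X y -> X (x - y).
Proof. by move=> hX hx hy; apply: subD => //; apply: subN. Qed.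

Lemma ssumP X Y z : ssum X Y z <-> exists x y, X x /\ Y y /\ z = x + y.
Proof. by []. Qed.

Lemma ssum_sub X Y : is_subspace X -> is_subspace Y -> is_subspace (ssum X Y).
Proof.
move=> hX hY; split; first by exists 0, 0; rewrite addr0; split; [exact: sub0|split; [exact: sub0|]].
split.
  move=> _ _ [x1 [y1 [h1 [h2 ->]]]] [x2 [y2 [h3 [h4 ->]]]].
  exists (x1 + x2), (y1 + y2); split; first exact: subD.
  split; first exact: subD.
  by rewrite addrACA.
move=> a _ [x1 [y1 [h1 [h2 ->]]]]; exists (a *: x1), (a *: y1).
by split; [exact: subZ|split; [exact: subZ|rewrite scalerDr]].
Qed.

Lemma line_sub v : is_subspace (line v).
Proof.
split; first by exists 0; rewrite scale0r.
split; first by move=> _ _ [a ->] [b ->]; exists (a + b); rewrite scalerDl.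
by move=> c _ [a ->]; exists (c * a); rewrite scalerA.
Qed.

Lemma setI_sub X Y : is_subspace X -> is_subspace Y -> is_subspace (X `&` Y).
Proof.
move=> hX hY; split; first by split; exact: sub0.
split; first by move=> x y [] ? ? [] ? ?; split; apply: subD.
by move=> a x [] ? ?; split; apply: subZ.
Qed.

Lemma ssum_l X Y : is_subspace Y -> X `<=` ssum X Y.
Proof. by move=> hY x hx; exists x, 0; rewrite addr0; split => //; split => //; exact: sub0. Qed.
Lemma ssum_r X Y : is_subspace X -> Y `<=` ssum X Y.
Proof. by move=> hX y hy; exists 0, y; rewrite add0r; split => //; exact: sub0. Qed.

Lemma ssum_min X Y Z : is_subspace Z -> X `<=` Z -> Y `<=` Z -> ssum X Y `<=` Z.
Proof. by move=> hZ hXZ hYZ _ [x [y [hx [hy ->]]]]; apply: subD => //; [exact: hXZ|exact: hYZ]. Qed.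

Lemma ssumC X Y : ssum X Y = ssum Y X.
Proof.
by apply/seteqP; split=> _ [x [y [hx [hy ->]]]]; exists y, x; rewrite addrC.
Qed.

Lemma line_in v : line v v. Proof. by exists 1; rewrite scale1r. Qed.
Lemma line_min Z v : is_subspace Z -> Z v -> line v `<=` Z.
Proof. by move=> hZ hv _ [a ->]; exact: subZ. Qed.

Lemma ext_in X v : is_subspace X -> ssum X (line v) v.
Proof. move=> hX; apply: ssum_r => //; exact: line_in. Qed.

Lemma ext_min X Z v : is_subspace Z -> X `<=` Z -> Z v -> ssum X (line v) `<=` Z.
Proof. by move=> hZ hXZ hv; apply: ssum_min => //; exact: line_min. Qed.

Lemma extP X v z : ssum X (line v) z <-> exists x a, X x /\ z = x + a *: v.
Proof.
split; first by move=> [x [_ [hx [[a ->] ->]]]]; exists x, a.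
by move=> [x [a [hx ->]]]; exists x, (a *: v); split => //; split => //; exists a.
Qed.

Lemma ext_sub X v : is_subspace X -> is_subspace (ssum X (line v)).
Proof. by move=> hX; apply: ssum_sub => //; exact: line_sub. Qed.

Lemma scale_cancel X x a : is_subspace X -> ~ X x -> X (a *: x) -> a = 0.
Proof.
move=> hX hx ha; apply: contra_notP hx => /eqP a0.
by rewrite -[x]scale1r -(unitK a0) -scalerA; apply: subZ.
Qed.

Lemma exchange S v w : is_subspace S -> ~ S v ->
  ssum S (line v) w -> ~ S w -> ssum S (line w) = ssum S (line v).
Proof.
move=> hS hv hw hSw; have [s [a [hs ew]]] := (extP _ _ _).1 hw.
have a0 : a != 0.
  by apply/eqP => a0; apply: hSw; rewrite ew a0 scale0r addr0.
apply/seteqP; split.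
  apply: ext_min => //; first exact: ext_sub.
  by apply: ssum_l; exact: line_sub.
apply: ext_min; first exact: ext_sub.
  by apply: ssum_l; exact: line_sub.
apply/extP; exists (- (a^-1 *: s)), a^-1; split; first by apply: subN => //; exact: subZ.
rewrite ew scalerDr scalerA (unitK a0) scale1r.
by rewrite addrA addNr add0r.
Qed.


Lemma cd1_subset X Z : codim1 X Z -> X `<=` Z. Proof. by case. Qed.
Lemma cd1_neq X Z : codim1 X Z -> X <> Z.
Proof. by move=> [_ [v [hv [nv _]]]] e; apply: nv; rewrite e. Qed.
Lemma cd1_sub X Z : is_subspace X -> codim1 X Z -> is_subspace Z.
Proof. by move=> hX [_ [v [_ [_ ->]]]]; exact: ext_sub. Qed.
Lemma cd1_exch X Z w : is_subspace X -> codim1 X Z -> Z w -> ~ X w ->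
  Z = ssum X (line w).
Proof. by move=> hX [_ [v [hv [nv e]]]] hw nw; rewrite e (@exchange X v w) // -e. Qed.
Lemma cd1_ext X v : is_subspace X -> ~ X v -> codim1 X (ssum X (line v)).
Proof.
move=> hX nv; split; first by apply: ssum_l; exact: line_sub.
by exists v; split => //; exact: ext_in.
Qed.

Lemma intervalA M X Y : is_subspace M -> is_subspace X -> codim1 M Y ->
  M `<=` X -> X `<=` Y -> X = M \/ X = Y.
Proof.
move=> hM hX hY hMX hXY.
case: (classic (exists x, X x /\ ~ M x)) => [[x [hx nx]]|nex].
  right; apply/seteqP; split => //.
  rewrite (cd1_exch hM hY (hXY _ hx) nx); exact: ext_min.
left; apply/seteqP; split => // z hz; apply: NNPP => nz; apply: nex; by exists z.
Qed.

Lemma cd1_self X : ~ codim1 X X.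
Proof. by move=> /cd1_neq. Qed.

Lemma ssum_id X Y : is_subspace X -> is_subspace Y -> Y `<=` X -> ssum X Y = X.
Proof.
move=> hX hY hYX; apply/seteqP; split; first exact: ssum_min.
exact: ssum_l.
Qed.

Lemma F1 X Y Z : is_subspace X -> is_subspace Y -> codim1 X Z -> codim1 Y Z ->
  X <> Y -> codim1 (X `&` Y) X /\ ssum X Y = Z.
Proof.
move=> hX hY hXZ hYZ nXY.
have hZ := cd1_sub hX hXZ.
have [x [hx nx]] : exists x, X x /\ ~ Y x.
  apply: NNPP => nex; have sXY : X `<=` Y.
    move=> z hz; apply: NNPP => nz; apply: nex; by exists z.
  case: (intervalA hX hY hXZ sXY (cd1_subset hYZ)) => e.
    by apply: nXY.
  by apply: (cd1_neq hYZ).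
have eZ := cd1_exch hY hYZ (cd1_subset hXZ hx) nx.
split.
  split; first by move=> z [].
  exists x; split => //; split; first by case.
  apply/seteqP; split.
    move=> z hz; have : Z z by exact: cd1_subset hXZ _ hz.
    rewrite eZ => /extP [y [a [hy ez]]].
    apply/extP; exists y, a; split => //; split => //.
    have -> : y = z - a *: x by rewrite ez addrK.
    by apply: subB => //; apply: subZ.
  apply: ext_min => //; by move=> z [].
have hs : ssum X Y `<=` Z by apply: ssum_min => //; exact: cd1_subset.
case: (intervalA hX (ssum_sub hX hY) hXZ (ssum_l (X:=X) hY) hs) => e //.
exfalso; have sYX : Y `<=` X by rewrite -[X in _ `<=` X]e; exact: ssum_r.
case: (intervalA hY hX hYZ sYX (cd1_subset hXZ)) => e'; first by apply: nXY.
exact: (cd1_neq hXZ e').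
Qed.

Lemma F2 M X Y : is_subspace M -> codim1 M X -> codim1 M Y -> X <> Y ->
  codim1 X (ssum X Y) /\ X `&` Y = M.
Proof.
move=> hM hMX hMY nXY.
have hX := cd1_sub hM hMX; have hY := cd1_sub hM hMY.
have notin : forall A B, codim1 M A -> codim1 M B -> A <> B ->
    exists t, B t /\ ~ A t /\ B = ssum M (line t) /\ ~ M t.
  move=> A B hA hB nAB; have [_ [t [hb [nb eB]]]] := hB.
  exists t; split => //; split; last by split.
  move=> hAb; have sBA : B `<=` A.
    rewrite eB; apply: ext_min => //; [exact: cd1_sub hM hA|exact: cd1_subset].
  case: (intervalA hM (cd1_sub hM hB) hA (cd1_subset hB) sBA) => e.
    by apply: (cd1_neq hB); rewrite e.
  by apply: nAB.
have [y [hy [ny [eY nMy]]]] := notin _ _ hMX hMY nXY.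
have [x [hx [nx [eX nMx]]]] := notin _ _ hMY hMX (nesym nXY).
split.
  have -> : ssum X Y = ssum X (line y).
    apply/seteqP; split.
      apply: ssum_min; [exact: ext_sub|apply: ssum_l; exact: line_sub|].
      rewrite eY; apply: ext_min; [exact: ext_sub| |exact: ext_in].
      by move=> z hz; apply: ssum_l; [exact: line_sub|exact: cd1_subset hMX _ hz].
    apply: ext_min; [exact: ssum_sub|exact: ssum_l|exact: ssum_r].
  exact: cd1_ext.
have hI : M `<=` X `&` Y by move=> z hz; split; [exact: cd1_subset hMX _ hz|exact: cd1_subset hMY _ hz].
case: (intervalA hM (setI_sub hX hY) hMX hI (fun z => @proj1 _ _)) => e //.
exfalso; apply: nx; have : (X `&` Y) x by rewrite e.
by case.
Qed.

Lemma adj_sym X Y : adjacent X Y -> adjacent Y X.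
Proof. by rewrite /adjacent ssumC => -[]. Qed.

Lemma adj_int X Y : is_subspace X -> is_subspace Y -> adjacent X Y -> X <> Y ->
  codim1 (X `&` Y) X /\ codim1 (X `&` Y) Y.
Proof.
move=> hX hY [h1 h2] nXY; split; first exact: (F1 hX hY h1 h2 nXY).1.
rewrite setIC; exact: (F1 hY hX h2 h1 (nesym nXY)).1.
Qed.

Lemma adj_of_int M X Y : is_subspace M -> codim1 M X -> codim1 M Y -> X <> Y ->
  adjacent X Y.
Proof.
move=> hM hX hY nXY; split; first exact: (F2 hM hX hY nXY).1.
rewrite ssumC; exact: (F2 hM hY hX (nesym nXY)).1.
Qed.

Lemma adj_of_top N X Y : is_subspace X -> is_subspace Y -> codim1 X N -> codim1 Y N ->
  X <> Y -> adjacent X Y.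
Proof.
move=> hX hY h1 h2 nXY; have [_ e] := F1 hX hY h1 h2 nXY.
by split; rewrite e.
Qed.

Lemma adj_not_sub X Y : is_subspace X -> is_subspace Y -> adjacent X Y -> ~ X `<=` Y.
Proof.
move=> hX hY [_ h] sXY; apply: (cd1_self (X:=Y)).
by rewrite -{2}(ssum_id hY hX sXY) ssumC.
Qed.

Lemma helperH1 M Z A : is_subspace M -> is_subspace Z -> is_subspace A ->
  codim1 M A -> codim1 (Z `&` A) A -> ~ M `<=` Z -> A `<=` ssum Z M.
Proof.
move=> hM hZ hA hMA hZA nMZ.
have hZA' := setI_sub hZ hA.
have s1 : ssum M (Z `&` A) `<=` A.
  apply: ssum_min; [exact: hA | exact: cd1_subset hMA | by move=> z [_ ?]].
case: (intervalA hM (ssum_sub hM hZA') hMA (ssum_l (X:=M) hZA') s1) => e.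
  have s2 : Z `&` A `<=` M by rewrite -e; exact: ssum_r.
  case: (intervalA hZA' hM hZA s2 (cd1_subset hMA)) => e2.
    by exfalso; apply: nMZ; rewrite e2 => z [].
  by exfalso; apply: (cd1_neq hMA).
rewrite -e; apply: ssum_min; [exact: ssum_sub| exact: ssum_r|].
by move=> z [hz _]; apply: ssum_l.
Qed.

Lemma triangle X Y Z : is_subspace X -> is_subspace Y -> is_subspace Z ->
  adjacent X Y -> adjacent X Z -> adjacent Y Z -> X <> Y -> X <> Z -> Y <> Z ->
  X `&` Y `<=` Z \/ Z `<=` ssum X Y.
Proof.
move=> hX hY hZ aXY aXZ aYZ nXY nXZ nYZ.
case: (classic (X `&` Y `<=` Z)) => hMZ; [by left|right].
have hM := setI_sub hX hY.
have [hMX hMY] := adj_int hX hY aXY nXY.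
have hZX := (adj_int hZ hX (adj_sym aXZ) (nesym nXZ)).2.
have hZY := (adj_int hZ hY (adj_sym aYZ) (nesym nYZ)).2.
have sX := helperH1 hM hZ hX hMX hZX hMZ.
have sY := helperH1 hM hZ hY hMY hZY hMZ.
have sN : ssum X Y `<=` ssum X Z.
  apply: (subset_trans (B := ssum Z (X `&` Y))).
    by apply: ssum_min => //; exact: ssum_sub.
  apply: ssum_min; [exact: ssum_sub|exact: ssum_r|].
  by move=> z [hz _]; apply: ssum_l.
case: (intervalA hX (ssum_sub hX hY) aXZ.1 (ssum_l (X:=X) hY) sN) => e.
  by exfalso; apply: (cd1_neq aXY.1).
by rewrite e; exact: ssum_r.
Qed.

Definition star M : set (set V) := [set Z | Gset (V:=V) Z /\ codim1 M Z].
Definition top N : set (set V) := [set Z | Gset (V:=V) Z /\ codim1 Z N].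

Lemma classify D X Y : is_clique D -> D X -> D Y -> X <> Y ->
  D `<=` star (X `&` Y) \/ D `<=` top (ssum X Y).
Proof.
move=> [DG Dadj] DX DY nXY.
have hX : is_subspace X by case: (DG _ DX).
have hY : is_subspace Y by case: (DG _ DY).
have aXY := Dadj _ _ DX DY nXY.
have hM := setI_sub hX hY.
have [hMX hMY] := adj_int hX hY aXY nXY.
have hsub : forall Z, D Z -> is_subspace Z by move=> Z /DG [].
have i1 : forall Z, D Z -> Z <> X -> X `&` Y `<=` Z -> Z `&` X = X `&` Y.
  move=> Z DZ nZX sMZ; have hZ := hsub _ DZ.
  have aZX := Dadj _ _ DZ DX nZX.
  have s1 : X `&` Y `<=` Z `&` X by move=> z hz; split => //; [exact: sMZ|case: hz].
  case: (intervalA hM (setI_sub hZ hX) hMX s1 (fun z => @proj2 _ _)) => // e.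
  exfalso; apply: (adj_not_sub hX hZ (adj_sym aZX)).
  by rewrite -e => z [].
have i2 : forall Z, D Z -> X `&` Y `<=` Z -> codim1 (X `&` Y) Z.
  move=> Z DZ sMZ; case: (classic (Z = X)) => [->//|nZX].
  rewrite -(i1 _ DZ nZX sMZ).
  exact: (adj_int (hsub _ DZ) hX (Dadj _ _ DZ DX nZX) nZX).1.
have j1 : forall Z, D Z -> Z <> X -> Z `<=` ssum X Y -> ssum X Z = ssum X Y.
  move=> Z DZ nZX sZN; have hZ := hsub _ DZ.
  have aXZ := Dadj _ _ DX DZ (nesym nZX).
  have s1 : ssum X Z `<=` ssum X Y.
    apply: ssum_min => //; [exact: ssum_sub|exact: ssum_l].
  case: (intervalA hX (ssum_sub hX hZ) aXY.1 (ssum_l (X:=X) hZ) s1) => // e.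
  exfalso; apply: (adj_not_sub hZ hX (adj_sym aXZ)).
  by rewrite -[X in _ `<=` X]e; exact: ssum_r.
have j2 : forall Z, D Z -> Z `<=` ssum X Y -> codim1 Z (ssum X Y).
  move=> Z DZ sZN; case: (classic (Z = X)) => [->|nZX]; first exact: aXY.1.
  rewrite -(j1 _ DZ nZX sZN).
  exact: (Dadj _ _ DX DZ (nesym nZX)).2.
have k : forall Z, D Z -> X `&` Y `<=` Z \/ Z `<=` ssum X Y.
  move=> Z DZ; case: (classic (Z = X)) => [->|nZX]; first by left => z [].
  case: (classic (Z = Y)) => [->|nZY]; first by left => z [].
  apply: triangle => //; try exact: hsub; try exact: Dadj.
  - exact: Dadj _ _ DX DZ (nesym nZX).
  - exact: Dadj _ _ DY DZ (nesym nZY).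
  - exact: nesym.
  - exact: nesym.
case: (classic (D `<=` star (X `&` Y))) => [|nstar]; first by left.
right => Z2 DZ2; split; first exact: DG.
apply: j2 => //; apply: NNPP => nZ2N.
have [Z1 [DZ1 nZ1]] : exists Z1, D Z1 /\ ~ star (X `&` Y) Z1.
  apply: NNPP => nex; apply: nstar => z Dz; apply: NNPP => nz; apply: nex; by exists z.
have nMZ1 : ~ X `&` Y `<=` Z1 by move=> sM; apply: nZ1; split; [exact: DG|exact: i2].
have sZ1N : Z1 `<=` ssum X Y by case: (k _ DZ1).
have sMZ2 : X `&` Y `<=` Z2 by case: (k _ DZ2).
have nZ1X : Z1 <> X by move=> e; apply: nMZ1; rewrite e => z [].
have nZ2X : Z2 <> X by move=> e; apply: nZ2N; rewrite e; exact: ssum_l.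
have nZ12 : Z1 <> Z2 by move=> e; apply: nMZ1; rewrite e.
have hZ1 := hsub _ DZ1; have hZ2 := hsub _ DZ2.
have := triangle hX hZ1 hZ2 (Dadj _ _ DX DZ1 (nesym nZ1X)) (Dadj _ _ DX DZ2 (nesym nZ2X))
  (Dadj _ _ DZ1 DZ2 nZ12) (nesym nZ1X) (nesym nZ2X) nZ12.
rewrite (j1 _ DZ1 nZ1X sZ1N) => -[s|//].
have sXZ1M : X `&` Z1 `<=` X `&` Y.
  rewrite -(i1 _ DZ2 nZ2X sMZ2) => z hz; split; [exact: s|by case: hz].
have cXZ1 : codim1 (X `&` Z1) X.
  exact: (adj_int hX hZ1 (Dadj _ _ DX DZ1 (nesym nZ1X)) (nesym nZ1X)).1.
case: (intervalA (setI_sub hX hZ1) hM cXZ1 sXZ1M (fun z => @proj1 _ _)) => e.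
  by apply: nMZ1; rewrite e => z [].
by apply: (cd1_neq hMX).
Qed.

Lemma star_clique M : is_subspace M -> is_clique (star M).
Proof.
move=> hM; split; first by move=> Z [].
by move=> X Y [_ hX] [_ hY] nXY; exact: adj_of_int hM hX hY nXY.
Qed.

Lemma top_clique N : is_clique (top N).
Proof.
split; first by move=> Z [].
by move=> X Y [[hX _] cX] [[hY _] cY] nXY; exact: adj_of_top hX hY cX cY nXY.
Qed.

Lemma cd1_proper X Z : codim1 X Z -> X `<` Z.
Proof.
move=> [s [v [hv [nv _]]]]; split => // h; apply: nv; exact: h.
Qed.

Lemma interval M X0 N Z : is_subspace M -> is_subspace Z ->
  codim1 M X0 -> codim1 X0 N -> M `<` Z -> Z `<` N -> codim1 M Z /\ codim1 Z N.
Proof.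
move=> hM hZ hMX hXN [sMZ nZM] [sZN nNZ].
have hX := cd1_sub hM hMX.
case: (classic (Z = X0)) => [->|nZX]; first by split.
have [_ [x0 [hx0 [nx0 eX]]]] := hMX.
have hI : Z `&` X0 = M.
  have s1 : M `<=` Z `&` X0 by move=> z hz; split; [exact: sMZ|exact: cd1_subset hMX _ hz].
  case: (intervalA hM (setI_sub hZ hX) hMX s1 (fun z => @proj2 _ _)) => // e.
  have sXZ : X0 `<=` Z by rewrite -e => z [].
  case: (intervalA hX hZ hXN sXZ sZN) => e2; first by exfalso; apply: nZX.
  by exfalso; apply: nNZ; rewrite e2.
have [x [hx nx]] : exists x, Z x /\ ~ X0 x.
  apply: NNPP => nex; have sZX : Z `<=` X0.
    by move=> z hz; apply: NNPP => nz; apply: nex; exists z.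
  case: (intervalA hM hZ hMX sMZ sZX) => e; first by apply: nZM; rewrite e.
  by apply: nZX.
have eN := cd1_exch hX hXN (sZN _ hx) nx.
have nMx : ~ M x by move=> hmx; apply: nx; exact: cd1_subset hMX _ hmx.
have eZ : Z = ssum M (line x).
  apply/seteqP; split; last exact: ext_min.
  move=> z hz; have : N z by exact: sZN.
  rewrite eN => /extP [y [a [hy ez]]]; apply/extP; exists y, a; split => //.
  rewrite -hI; split => //; have -> : y = z - a *: x by rewrite ez addrK.
  by apply: subB => //; exact: subZ.
split; first by rewrite eZ; exact: cd1_ext.
have nZx0 : ~ Z x0.
  move=> h; have sXZ : X0 `<=` Z by rewrite eX; exact: ext_min.
  case: (intervalA hX hZ hXN sXZ sZN) => e2; first by apply: nZX.
  by apply: nNZ; rewrite e2.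
have -> : N = ssum Z (line x0).
  apply/seteqP; split.
    rewrite eN; apply: ext_min; [exact: ext_sub| |by apply: ssum_l; [exact: line_sub|]].
    rewrite eX; apply: ext_min; [exact: ext_sub| |exact: ext_in].
    by move=> z hz; apply: ssum_l; [exact: line_sub|exact: sMZ].
  apply: ext_min; [exact: cd1_sub hX hXN|exact: sZN|exact: cd1_subset hXN _ hx0].
exact: cd1_ext.
Qed.

Lemma pencil_eq M X0 N : is_subspace M -> codim1 M X0 -> codim1 X0 N ->
  pencil_of M N = star M `&` top N.
Proof.
move=> hM hMX hXN; apply/seteqP; split.
  move=> Z [GZ [pM pN]]; have [hZ _] := GZ.
  have [c1 c2] := interval hM hZ hMX hXN pM pN.
  by split; split.
move=> Z [[GZ c1] [_ c2]]; split => //; split; exact: cd1_proper.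
Qed.

Lemma hyp_avoid W x : is_subspace W -> ~ W x -> exists lam : V -> K,
  (forall u v, lam (u + v) = lam u + lam v) /\ (forall a u, lam (a *: u) = a * lam u) /\
  (forall w, W w -> lam w = 0) /\ lam x = 1.
Proof.
move=> hW nWx.
pose P : set (set V) := [set S | S = set0 \/ (is_subspace S /\ W `<=` S /\ ~ S x)].
have Pne : forall S z, P S -> S z -> is_subspace S /\ W `<=` S /\ ~ S x.
  by move=> S z [->|//].
have [A [PA Amax]] : exists A, P A /\ forall B, A `<` B -> ~ P B.
  apply: Zorn_bigcup => F FP Ftot.
  case: (classic (exists S, F S /\ exists z, S z)) => [[S0 [FS0 [z0 hz0]]]|nex].
    have [hS0 [WS0 _]] := Pne _ _ (FP _ FS0) hz0.
    right; split.
      split; first by exists S0 => //; exact: sub0.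
      split.
        move=> z1 z2 [S1 FS1 h1] [S2 FS2 h2].
        case: (Ftot _ _ FS1 FS2) => sS.
          have [hS2 _] := Pne _ _ (FP _ FS2) h2.
          by exists S2 => //; apply: subD => //; exact: sS.
        have [hS1 _] := Pne _ _ (FP _ FS1) h1.
        by exists S1 => //; apply: subD => //; exact: sS.
      move=> a z1 [S1 FS1 h1]; have [hS1 _] := Pne _ _ (FP _ FS1) h1.
      by exists S1 => //; exact: subZ.
    split; first by move=> w hw; exists S0 => //; exact: WS0.
    move=> [S1 FS1 h1]; have [_ [_ nx]] := Pne _ _ (FP _ FS1) h1; exact: nx.
  left; apply/seteqP; split => // z [S FS hz]; apply: nex; exists S; split => //.
  by exists z.
have [hA [WA nAx]] : is_subspace A /\ W `<=` A /\ ~ A x.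
  case: PA => [eA|//]; exfalso; apply: (Amax W).
    rewrite eA; split => // h; have := h 0 (sub0 hW); done.
  by right; split => //; split.
have ex : forall v, exists a, A (v - a *: x).
  move=> v; case: (classic (A v)) => hv.
    by exists 0; rewrite scale0r subr0.
  have pB : A `<` ssum A (line v).
    split; first by apply: ssum_l; exact: line_sub.
    move=> h; apply: hv; apply: h; exact: ext_in.
  have hBx : ssum A (line v) x.
    apply: NNPP => nBx; apply: (Amax _ pB); right; split; first exact: ext_sub.
    split => //; apply: subset_trans WA _; apply: ssum_l; exact: line_sub.
  have [y [c [hy ex]]] := (extP _ _ _).1 hBx.
  have c0 : c != 0 by apply/eqP => c0; apply: nAx; rewrite ex c0 scale0r addr0.
  exists c^-1.
  have -> : v - c^-1 *: x = - (c^-1 *: y).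
    rewrite ex scalerDr scalerA (unitK c0) scale1r opprD addrCA addrN addr0 //.
  by apply: subN => //; exact: subZ.
have uniq : forall v a b, A (v - a *: x) -> A (v - b *: x) -> a = b.
  move=> v a b ha hb; apply/eqP; rewrite -subr_eq0; apply/eqP.
  apply: (scale_cancel hA nAx).
  have -> : (a - b) *: x = (v - b *: x) - (v - a *: x).
    by rewrite opprB [RHS]addrC addrA addrNK scalerBl.
  exact: subB.
pose lam v := proj1_sig (cid (ex v)).
have lamP : forall v, A (v - lam v *: x) by move=> v; exact: (proj2_sig (cid (ex v))).
exists lam; split.
  move=> u v; apply: (uniq (u + v)); first exact: lamP.
  have -> : u + v - (lam u + lam v) *: x = (u - lam u *: x) + (v - lam v *: x).
    by rewrite scalerDl opprD addrACA.
  by apply: subD => //; exact: lamP.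
split.
  move=> a u; apply: (uniq (a *: u)); first exact: lamP.
  rewrite -scalerA -scalerBr; apply: subZ => //; exact: lamP.
split.
  move=> w hw; apply: (uniq w); first exact: lamP.
  by rewrite scale0r subr0; exact: WA.
apply: (uniq x); first exact: lamP.
by rewrite scale1r subrr; exact: sub0.
Qed.

Definition mklin (h : V -> V) (H : linear h) : {linear V -> V} :=
  HB.pack h (GRing.isLinear.Build K V V *:%R h H).

Lemma G_exch S Y Z : Gset (V:=V) Y -> is_subspace S -> codim1 S Y -> codim1 S Z ->
  Gset (V:=V) Z.
Proof.
move=> [hY [f [rf kf]]] hS cSY cSZ.
have [_ [y [hy [ny eY]]]] := cSY; have [_ [u [hu [nu eZ]]]] := cSZ.
have hZ := cd1_sub hS cSZ; split => //.
case: (classic (Y u)) => Yu.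
  have eYZ : Y = Z by rewrite eZ; exact: cd1_exch hS cSY Yu nu.
  by rewrite -eYZ; exists f.
have [w ew] : {w | w = u - y} by exists (u - y).
have nyW : ~ ssum S (line w) y.
  move=> /extP [s [a [hs ey]]].
  have Yau : Y (a *: u).
    have -> : a *: u = y - s + a *: y.
      by rewrite {1}ey ew [s + _]addrC addrK scalerBr addrNK.
    apply: subD; [exact: hY| |exact: subZ].
    by apply: subB => //; exact: cd1_subset cSY _ hs.
  have a0 := scale_cancel hY Yu Yau.
  by apply: ny; rewrite ey a0 scale0r addr0.
have [lam [lamD [lamZ [lamW lamy]]]] := hyp_avoid (ext_sub w hS) nyW.
have lamS : forall s, S s -> lam s = 0.
  by move=> s hs; apply: lamW; apply: ssum_l => //; exact: line_sub.
have lam0 : lam 0 = 0 by have := lamZ 0 0; rewrite scale0r mul0r.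
have lamw : lam w = 0 by apply: lamW; exact: ext_in.
have lamu : lam u = 1.
  by have := lamD w y; rewrite lamw lamy add0r ew addrNK.
pose phi v := v + lam v *: w.
pose psi v := v - lam v *: w.
have phiL : linear phi.
  move=> a p q; rewrite /phi lamD lamZ scalerDl -scalerA scalerDr.
  by rewrite addrACA.
have psiL : linear psi.
  move=> a p q; rewrite /psi lamD lamZ scalerDl -scalerA scalerDr opprD.
  by rewrite scalerN addrACA.
have psiphi : forall v, psi (phi v) = v.
  by move=> v; rewrite /psi /phi lamD lamZ lamw mulr0 addr0 addrK.
have phipsi : forall v, phi (psi v) = v.
  move=> v; rewrite /psi /phi lamD.
  have -> : lam (- (lam v *: w)) = 0.
    by rewrite -scaleNr lamZ lamw mulr0.
  by rewrite addr0 subrK.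
have phiY : forall s a, S s -> phi (s + a *: y) = s + a *: u.
  move=> s a hs; rewrite /phi lamD lamZ lamS // lamy mulr1 add0r.
  by rewrite -addrA -scalerDr ew [y + _]addrC addrNK.
have psiZ : forall s a, S s -> psi (s + a *: u) = s + a *: y.
  move=> s a hs; rewrite /psi lamD lamZ lamS // lamu mulr1 add0r.
  by rewrite -addrA -scalerBr ew opprB [u + _]addrC subrK.
have gL : linear (phi \o f \o psi).
  by move=> a p q /=; rewrite psiL linearP phiL.
exists (mklin gL); split.
  apply/seteqP; split.
    move=> _ [t _ <-]; rewrite /= /mklin /=.
    have : Y (f (psi t)) by rewrite -rf; exists (psi t).
    rewrite {1}eY => /extP [s [a [hs ->]]]; rewrite phiY //.
    by rewrite eZ; apply/extP; exists s, a.
  move=> z; rewrite {1}eZ => /extP [s [a [hs ->]]].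
  have : Y (s + a *: y).
    rewrite eY; apply/extP; by exists s, a.
  rewrite -rf => -[t _ ft]; exists (phi t) => //.
  by rewrite /= psiphi ft phiY.
apply/seteqP; split.
  move=> v /= gv.
  have fz : f (psi v) = 0.
    by rewrite -(psiphi (f (psi v))) gv /psi lam0 scale0r subr0.
  have : Y (psi v) by rewrite -kf.
  rewrite {1}eY => /extP [s [a [hs ev]]].
  rewrite -(phipsi v) ev phiY // eZ; apply/extP; by exists s, a.
move=> z; rewrite {1}eZ => /extP [s [a [hs ->]]] /=.
have : Y (psi (s + a *: u)).
  rewrite psiZ // eY; apply/extP; by exists s, a.
rewrite -kf /= => ->.
by rewrite /phi lam0 scale0r addr0.
Qed.

Lemma one_neq0 : (1 : K) <> 0.
Proof. by apply/eqP; exact: oner_neq0. Qed.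
Lemma mone_neq0 : (-1 : K) <> 0.
Proof. by move=> /eqP; rewrite oppr_eq0 => /eqP; exact: one_neq0. Qed.

Lemma span2_contra p q : (forall z, exists a b, z = a *: p + b *: q) -> ~ dim_gt2 V.
Proof.
move=> sp [u [v [w ind]]].
have u0 : u <> 0.
  move=> e; have := ind 1 0 0; rewrite e scaler0 !scale0r !addr0 => /(_ erefl) [h _].
  exact: one_neq0.
have [r sr] : exists r, forall z, exists a b, z = a *: u + b *: r.
  have [a [b eu]] := sp u.
  case: (eqVneq a 0) => [a0|a0].
    have b0 : b != 0 by apply/eqP => b0; apply: u0; rewrite eu a0 b0 !scale0r addr0.
    exists p => z; have [c [d ez]] := sp z; exists (d * b^-1), c.
    rewrite ez eu a0 scale0r add0r scalerA -mulrA (unitK b0) mulr1 addrC //.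
  exists q => z; have [c [d ez]] := sp z; exists (c * a^-1), (d - c * a^-1 * b).
  rewrite ez eu scalerDr !scalerA -mulrA (unitK a0) mulr1 scalerBl -addrA.
  by congr (_ + _); rewrite addrCA addrN addr0.
have [c [d ev]] := sr v.
have d0 : d != 0.
  apply/eqP => d0; have := ind c (-1) 0.
  rewrite ev d0 scale0r addr0 scaleN1r scale0r addr0 subrr => /(_ erefl) [_ [h _]].
  exact: mone_neq0.
have [e [g ew]] := sr w.
have := ind (e - g * d^-1 * c) (g * d^-1) (-1).
have -> : (e - g * d^-1 * c) *: u + (g * d^-1) *: v + (-1) *: w = 0.
  rewrite scaleN1r ev ew scalerDr !scalerA -(mulrA g _ d) (unitK d0) mulr1 scalerBl.
  by rewrite addrA subrK addrN.
by move=> /(_ erefl) [_ [_ h]]; exact: mone_neq0.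
Qed.

Lemma notV X0 N : Gset (V:=V) X0 -> codim1 X0 N -> dim_gt2 V -> exists u, ~ N u.
Proof.
move=> [hX [f [rf kf]]] [_ [v [hv [nv eN]]]] hd; apply: NNPP => nex.
have allN : forall z, N z by move=> z; apply: NNPP => nz; apply: nex; exists z.
apply: (span2_contra (p := f v) (q := v)) hd => z.
have := allN z; rewrite eN => /extP [x [a [hx ->]]].
move: hx; rewrite -rf => -[t _ <-].
have := allN t; rewrite eN => /extP [x' [b [hx' ->]]].
have fx' : f x' = 0 by move: hx'; rewrite -kf.
exists b, a; by rewrite linearD fx' add0r linearZ_LR.
Qed.

Lemma notZero M X0 : Gset (V:=V) X0 -> codim1 M X0 -> dim_gt2 V ->
  exists m, M m /\ m <> 0.
Proof.
move=> [hX [f [rf kf]]] [_ [x0 [hx0 [nx0 eX]]]] hd; apply: NNPP => nex.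
have M0 : forall m, M m -> m = 0.
  by move=> m hm; apply: NNPP => nm; apply: nex; exists m.
have : X0 x0 by [].
rewrite -rf => -[s _ fs].
apply: (span2_contra (p := x0) (q := s)) hd => z.
have : X0 (f z) by rewrite -rf; exists z.
rewrite {1}eX => /extP [m [a [hm ez]]].
have : X0 (z - a *: s).
  rewrite -kf /= linearB linearZ_LR fs ez (M0 _ hm) add0r subrr //.
rewrite {1}eX => /extP [m' [b [hm' ez']]].
exists b, a; by rewrite -[z](subrK (a *: s)) ez' (M0 _ hm') add0r.
Qed.


Lemma main_sec (HdimV : dim_gt2 V) (P : set (set V)) :
  is_pencil P <->
  (P `<=` Gset (V:=V) /\ (exists X Y, P X /\ P Y /\ X <> Y) /\
   exists C1 C2 : set (set V), is_max_clique C1 /\ is_max_clique C2 /\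
     C1 <> C2 /\ P = C1 `&` C2).
Proof.
split.
  move=> [M [N [hM [hN [[X0 [GX0 [cMX cXN]]] eP]]]]].
  have hX0 : is_subspace X0 by case: GX0.
  have [_ [x0 [hx0 [nx0 eX]]]] := cMX.
  have [_ [v [hv [nv eN]]]] := cXN.
  have nMv : ~ M v by move=> h; apply: nv; exact: (cd1_subset cMX).
  have cMX1 := cd1_ext (v:=v) hM nMv.
  have GX1 := G_exch GX0 hM cMX cMX1.
  set X1 := ssum M (line v) in cMX1 GX1.
  have n01 : X0 <> X1 by move=> e; apply: nv; rewrite e; exact: ext_in.
  have [c01 i01] := F2 hM cMX cMX1 n01.
  have eN01 : ssum X0 X1 = N.
    have s : ssum X0 X1 `<=` N.
      apply: ssum_min; [exact: hN|exact: cd1_subset cXN|].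
      rewrite /X1; apply: ext_min; [exact: hN| |exact: hv].
      move=> z hz; apply: (cd1_subset cXN); exact: ((cd1_subset cMX) z hz).
    case: (intervalA hX0 (ssum_sub hX0 (cd1_sub hM cMX1)) cXN (ssum_l (X:=X0) (cd1_sub hM cMX1)) s) => // e.
    exfalso; apply: nv; rewrite -e; apply: ssum_r => //; exact: ext_in.
  have cX1N : codim1 X1 N.
    rewrite -eN01; exact: (adj_of_int hM cMX cMX1 n01).2.
  rewrite eP (pencil_eq hM cMX cXN).
  have [u nu] := notV GX0 cXN HdimV.
  have nMu : ~ M u by move=> h; apply: nu; apply: (cd1_subset cXN); exact: ((cd1_subset cMX) u h).
  have cMZs := cd1_ext (v:=u) hM nMu.
  have GZs := G_exch GX0 hM cMX cMZs.
  have Zs_star : star M (ssum M (line u)) by split.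
  have Zs_ntop : ~ top N (ssum M (line u)).
    move=> [_ c]; apply: nu; apply: cd1_subset c _ _; exact: ext_in.
  have [m [hm m0]] := notZero GX0 cMX HdimV.
  have nl0 : ~ line (0 : V) m by move=> [a]; rewrite scaler0.
  have [lam [lamD [lamZ [lamW lamm]]]] := hyp_avoid (line_sub 0) nl0.
  have lam0 : lam 0 = 0 by have := lamZ 0 0; rewrite scale0r mul0r.
  pose Z' := N `&` [set z | lam z = 0].
  have hker : is_subspace [set z | lam z = 0].
    split => //; split; first by move=> x y /= hx hy; rewrite lamD hx hy addr0.
    by move=> a x /= hx; rewrite lamZ hx mulr0.
  have hZ' : is_subspace Z' by apply: setI_sub.
  have Nm : N m by apply: (cd1_subset cXN); exact: ((cd1_subset cMX) m hm).
  have nZ'm : ~ Z' m by move=> [_ /= h]; move: h; rewrite lamm; exact: one_neq0.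
  have cZ'N : codim1 Z' N.
    split; first by move=> z [].
    exists m; split => //; split => //.
    apply/seteqP; split; last by apply: ext_min => //; move=> z [].
    move=> z hz; apply/extP; exists (z - lam z *: m), (lam z); split; last by rewrite subrK.
    split; first by apply: subB => //; exact: subZ.
    by rewrite /= lamD -scaleNr lamZ lamm mulr1 subrr.
  have nX0Z' : X0 <> Z' by move=> e; apply: nZ'm; rewrite -e; exact: ((cd1_subset cMX) m hm).
  have c1 := (F1 hX0 hZ' cXN cZ'N nX0Z').1.
  have c2 := (F1 hZ' hX0 cZ'N cXN (nesym nX0Z')).1.
  rewrite setIC in c2.
  have GZ' := G_exch GX0 (setI_sub hX0 hZ') c1 c2.
  have Z'_top : top N Z' by split.
  have Z'_nstar : ~ star M Z' by move=> [_ c]; apply: nZ'm; exact: ((cd1_subset c) m hm).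
  have X0s : star M X0 by split.
  have X1s : star M X1 by split.
  have cls : forall D, is_clique D -> D X0 -> D X1 -> D `<=` star M \/ D `<=` top N.
    move=> D cD D0 D1; by have := classify cD D0 D1 n01; rewrite i01 eN01.
  split; first by move=> Z [[GZ _] _].
  split.
    exists X0, X1; split; first by split; split.
    by split => //; split; split.
  exists (star M), (top N); split.
    split; first exact: star_clique.
    move=> D cD sD; case: (cls D cD (sD _ X0s) (sD _ X1s)) => sD'.
      by apply/seteqP; split.
    by exfalso; apply: Zs_ntop; apply: sD'; exact: sD.
  split.
    split; first exact: top_clique.
    move=> D cD sD.
    have X0t : top N X0 by split.
    have X1t : top N X1 by split.
    case: (cls D cD (sD _ X0t) (sD _ X1t)) => sD'.
      by exfalso; apply: Z'_nstar; apply: sD'; exact: sD.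
    by apply/seteqP; split.
  split => // e; apply: Zs_ntop; rewrite -e; exact: Zs_star.
move=> [PG [[X [Y [PX [PY nXY]]]] [C1 [C2 [mC1 [mC2 [n12 eP]]]]]]].
have [C1X C2X] : C1 X /\ C2 X by rewrite eP in PX.
have [C1Y C2Y] : C1 Y /\ C2 Y by rewrite eP in PY.
have hX : is_subspace X by case: (PG _ PX).
have hY : is_subspace Y by case: (PG _ PY).
have hM := setI_sub hX hY.
have aXY := mC1.1.2 _ _ C1X C1Y nXY.
have key : forall C, is_max_clique C -> C X -> C Y ->
    C = star (X `&` Y) \/ C = top (ssum X Y).
  move=> C [cC mC] CX CY; case: (classify cC CX CY nXY) => s.
    by left; apply/esym/mC => //; exact: star_clique.
  by right; apply/esym/mC => //; exact: top_clique.
have [cMX _] := adj_int hX hY aXY nXY.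
exists (X `&` Y), (ssum X Y); split => //; split; first exact: ssum_sub.
split; first by exists X; split; [exact: PG|split; [exact: cMX|exact: aXY.1]].
rewrite (pencil_eq hM cMX aXY.1) eP.
case: (key _ mC1 C1X C1Y) => e1; case: (key _ mC2 C2X C2Y) => e2.
- by exfalso; apply: n12; rewrite e1 e2.
- by rewrite e1 e2.
- by rewrite e1 e2 setIC.
- by exfalso; apply: n12; rewrite e1 e2.
Qed.

End LA.

Theorem theorem2p5 (K : unitRingType) (V : lmodType K)
  (HK : is_division_ring K) (HdimV : dim_gt2 V)
  (HG : exists X : set V, Gset X) (P : set (set V)) :
  is_pencil P <->
  (P `<=` Gset (V:=V) /\ (exists X Y, P X /\ P Y /\ X <> Y) /\
   exists C1 C2 : set (set V), is_max_clique C1 /\ is_max_clique C2 /\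
     C1 <> C2 /\ P = C1 `&` C2).
Proof. exact: main_sec HK HdimV P. Qed.
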